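(* Let $g\in\mathbb{I}_{\geq1}$, $c\in\mathbb{I}_{\geq g}$, $b\in\mathbb{I}_{\geq c}$ be integers with $q:=\lceil c/g\rceil\geq 2$. Let $\mathbb{X}_p\subseteq\mathbb{R}^{n_p}$, $\mathbb{U}_p\subseteq\mathbb{R}^{m_p}$ be closed sets containing the origin, $f_p:\mathbb{R}^{n_p}\times\mathbb{R}^{m_p}\to\mathbb{R}^{n_p}$ with $f_p(0,0)=0$, $\mathbb{X}_{f,p}\subseteq\mathbb{X}_p$ closed containing the origin, and $k_p:\mathbb{X}_{f,p}\to\mathbb{U}_p$. Consider the system $x^+=f(x,u)$ with state $x=(x_p,u_s,\beta)$, input $u=(u_c,\gamma,\delta)$ with $\gamma,\delta\in\{0,1\}$, $\gamma+\delta\leq1$, and $$f(x,u)=\big(f_p(x_p,(\gamma+\delta)u_c+(1-\gamma-\delta)u_s),\ (\gamma+\delta)u_c+(1-\gamma-\delta)u_s,\ \min\{\beta+(1-\delta)g-\gamma c,\,b\}\big).$$ Let $\mathbb{X}_f:=\mathbb{X}_{f,p}\times\mathbb{U}_p\times\mathbb{I}_{[0,b]}$, the terminal control sequence $\kappa_0(x):=(k_p(x_p),0,1)$ and $\kappa_j(x):=(0,0,0)$ for $j\in\mathbb{I}_{[1,q-1]}$, $f_0(x):=x$, $f_i(x):=f(f_{i-1}(x),\kappa_{(i-1)\bmod q}(f_{i-1}(x)))$, and let $f_{\beta,i}(x)$ be the last component of $f_i(x)$. For $\sigma>0$ let $V_{f,\beta}(\beta):=\sigma(b^2-\beta^2)$.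 Then there exists $\alpha:\mathbb{I}_{[0,b]}\to\mathbb{R}$ with $\alpha(b)=0$ and $\alpha(\beta)>0$ for all $\beta\in\mathbb{I}_{[0,b-1]}$ such that for all $x\in\mathbb{X}_f$, $$V_{f,\beta}(f_{\beta,q}(x))-V_{f,\beta}(\beta)\leq-\alpha(\beta).$$
   Context: $\mathbb{I}$ denotes the integers, $\mathbb{I}_{[a,b]}:=\mathbb{I}\cap[a,b]$, $\mathbb{I}_{\geq a}:=\mathbb{I}\cap[a,\infty)$. The component $\beta$ is the token level of a token bucket (size $b$, token rate $g$, transmission cost $c$); $\gamma=1$ denotes a transmission subject to the token bucket and $\delta=1$ a transmission over a direct link that consumes no tokens and during which no tokens are added. *)

(* Defs.v *)
From HB Require Import structures.
From mathcomp Require Import all_boot all_order all_algebra.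
From mathcomp Require Import all_classical all_reals all_analysis.
Set Implicit Arguments. Unset Strict Implicit. Unset Printing Implicit Defensive.
Import Order.TTheory GRing.Theory Num.Theory.
Local Open Scope ring_scope.

Definition tb_state (R : realType) (np mp : nat) : Type :=
  ('rV[R]_np * 'rV[R]_mp * int)%type.
Definition tb_input (R : realType) (mp : nat) : Type :=
  ('rV[R]_mp * int * int)%type.

Definition tb_q (g c : int) : nat := `|Num.ceil ((c%:~R : rat) / g%:~R)|%N.

Definition tb_f (R : realType) (np mp : nat)
  (fp : 'rV[R]_np -> 'rV[R]_mp -> 'rV[R]_np) (g c b : int)
  (x : tb_state R np mp) (u : tb_input R mp) : tb_state R np mp :=
  let: (xp, us, beta) := x in
  let: (uc, gam, del) := u in
  let uapp := ((gam + del)%:~R : R) *: uc + ((1 - gam - del)%:~R : R) *: us in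
  (fp xp uapp, uapp, Order.min (beta + (1 - del) * g - gam * c) b).

Definition tb_kappa (R : realType) (np mp : nat) (kp : 'rV[R]_np -> 'rV[R]_mp)
  (j : nat) (x : tb_state R np mp) : tb_input R mp :=
  if j == 0%N then (kp x.1.1, 0%R, 1%R) else (0%R, 0%R, 0%R).

Fixpoint tb_fi (R : realType) (np mp : nat)
  (fp : 'rV[R]_np -> 'rV[R]_mp -> 'rV[R]_np) (kp : 'rV[R]_np -> 'rV[R]_mp)
  (g c b : int) (q : nat) (i : nat) (x : tb_state R np mp) : tb_state R np mp :=
  match i with
  | 0 => x
  | i'.+1 => let y := tb_fi fp kp g c b q i' x in
             tb_f fp g c b y (tb_kappa kp (i' %% q) y)
  end.

Definition tb_Vf (R : realType) (sigma : R) (b beta : int) : R :=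
  sigma * ((b%:~R) ^+ 2 - (beta%:~R) ^+ 2).

(* Main.v *)
Require Import Defs.
From HB Require Import structures.
From mathcomp Require Import all_boot all_order all_algebra.
From mathcomp Require Import all_classical all_reals all_analysis.
From mathcomp Require Import zify lra.
Import Order.TTheory GRing.Theory Num.Theory numFieldTopology.Exports.
Local Open Scope ring_scope.
Local Open Scope classical_set_scope.

Lemma beta_traj (R : realType) (np mp : nat) (g c b : int)
  (fp : 'rV[R]_np -> 'rV[R]_mp -> 'rV[R]_np) (kp : 'rV[R]_np -> 'rV[R]_mp)
  (q : nat) xp us (beta : int) :
  0 <= g -> beta <= b -> forall i, (1 <= i <= q)%N ->
  (tb_fi fp kp g c b q i (xp, us, beta)).2 = Order.min (beta + (i.-1)%:Z * g) b.
Proof.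
move=> g0 bb; elim=> [//|i IH] /andP[_ iq].
case: i IH iq => [|i] IH iq.
  rewrite /= mod0n /tb_kappa /=.
  have -> : beta + (1 - 1) * g - 0 * c = beta by lia.
  rewrite mul0r addr0; case: leP; lia.
have iq' : (i.+1 < q)%N by [].
have := IH (ltnW iq').
change (tb_fi fp kp g c b q i.+2 (xp, us, beta)) with
  (let y := tb_fi fp kp g c b q i.+1 (xp, us, beta) in
   tb_f fp g c b y (tb_kappa kp (i.+1 %% q) y)).
case: (tb_fi fp kp g c b q i.+1 (xp, us, beta)) => [[a1 a2] y2] /= ->.
rewrite modn_small // /tb_kappa /=.
have hg : (i.+1)%:Z * g = i%:Z * g + g by rewrite -addn1 PoszD mulrDl mul1r.
rewrite hg.
case: (leP (beta + i%:Z * g) b) => h1; case: (leP (beta + (i%:Z * g + g)) b) => h2;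
 repeat (match goal with |- context [Order.min ?x ?y] => case: (leP x y) end); lia.
Qed.

Theorem lemma3 (R : realType) (np mp : nat) (g c b : int)
  (Xp : set 'rV[R]_np) (Up : set 'rV[R]_mp) (Xfp : set 'rV[R]_np)
  (fp : 'rV[R]_np -> 'rV[R]_mp -> 'rV[R]_np) (kp : 'rV[R]_np -> 'rV[R]_mp)
  (sigma : R) :
  1 <= g -> g <= c -> c <= b -> (2 <= tb_q g c)%N ->
  closed Xp -> Xp 0 -> closed Up -> Up 0 ->
  fp 0 0 = 0 ->
  closed Xfp -> Xfp 0 -> Xfp `<=` Xp ->
  (forall xp, Xfp xp -> Up (kp xp)) ->
  0 < sigma ->
  exists alpha : int -> R,
    alpha b = 0 /\
    (forall beta : int, 0 <= beta <= b - 1 -> 0 < alpha beta) /\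
    (forall (xp : 'rV[R]_np) (us : 'rV[R]_mp) (beta : int),
        Xfp xp -> Up us -> 0 <= beta <= b ->
        tb_Vf sigma b (tb_fi fp kp g c b (tb_q g c) (tb_q g c) (xp, us, beta)).2
          - tb_Vf sigma b beta <= - alpha beta).
Proof.
move=> g1 gc cb q2 _ _ _ _ _ _ _ _ _ s0.
set q := tb_q g c.
pose m (beta : int) := Order.min (beta + (q.-1)%:Z * g) b.
exists (fun beta => tb_Vf sigma b beta - tb_Vf sigma b (m beta)).
split; last split.
- rewrite /m; have -> : Order.min (b + (q.-1)%:Z * g) b = b.
    have : 0 <= (q.-1)%:Z * g by apply: mulr_ge0 => //; lia.
    case: leP; lia.
  by rewrite subrr.
- move=> beta /andP[h0 h1].
  have hm : beta < m beta.
    rewrite /m. have : (q.-1)%:Z * g >= g.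
      have : (1 <= q.-1)%N by rewrite -ltnS prednK // (leq_trans _ q2).
      move=> hq; nia.
    case: leP; lia.
  have hb0 : 0 <= beta by [].
  rewrite /tb_Vf -mulrBr; apply: mulr_gt0 => //.
  have A : (beta%:~R : R) < (m beta)%:~R by rewrite ltr_int.
  have B : (0 : R) <= beta%:~R by rewrite ler0z.
  nra.
- move=> xp us beta _ _ /andP[h0 h1].
  rewrite (@beta_traj R np mp g c b fp kp q xp us beta (ltW (lt_le_trans ltr01 g1)) h1) ; last by rewrite leqnn (leq_trans _ q2).
  by rewrite /m opprB.
Qed.
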